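(* Let $\alpha\in(0,1)$ and $R>0$. A target moves with position $(0,y_T(t))$, $\dot y_T=1$, and an observer with position $(x_O(t),y_O(t))$, $\dot x_O=\alpha\cos\psi$, $\dot y_O=\alpha\sin\psi$. Suppose at time $t_2$ the target lies on the boundary of the observer's disk of radius $R$ with relative bearing $\lambda\in[-\pi,\pi]$, i.e. $\big(x_O(t_2),y_O(t_2)-y_T(t_2)\big)=R(\sin\lambda,\cos\lambda)$, and that for $t\ge t_2$ the observer uses the constant heading $\psi\equiv\cos^{-1}\!\left(\frac{(\alpha^2-1)\sin\lambda}{\alpha^2+2\alpha\cos\lambda+1}\right)$. Then for every $t$ with $t_2<t<t_2+\frac{2R(\alpha+\cos\lambda)}{1-\alpha^2}$ one has $x_O(t)^2+(y_O(t)-y_T(t))^2<R^2$; i.e. the target remains strictly inside the observation disk until the escape time $t_f=t_2+\frac{2R(\alpha+\cos\lambda)}{1-\alpha^2}$.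
   Context: The observation disk is the closed disk of radius $R$ centered at the observer; the target escapes when its distance to the observer exceeds $R$. Headings are measured counterclockwise from the positive $x$-axis. *)

(* Defs.v *)
From Stdlib Require Export Reals.
Open Scope R_scope.

Definition heading2 (alpha lam : R) : R :=
  acos (((alpha ^ 2 - 1) * sin lam) / (alpha ^ 2 + 2 * alpha * cos lam + 1)).

(* Main.v *)
Require Import Defs.
From Stdlib Require Import Reals Lra.
Open Scope R_scope.
Lemma lin_from_deriv (f g : R -> R) (v t2 t : R)
  (Hf : forall u, derivable_pt_lim f u (g u))
  (Hg : forall u, t2 <= u -> g u = v) (Ht : t2 <= t) :
  f t = f t2 + v * (t - t2).
Proof.
  set (h := fun u => f u - v * u).
  assert (Hd : forall u, t2 <= u -> derivable_pt_lim h u 0).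
  { intros u Hu. unfold h.
    replace 0 with (g u - v * 1) by (rewrite Hg; lra).
    apply (derivable_pt_lim_minus f (fun u => v * u)). apply Hf.
    apply (derivable_pt_lim_scal id v u 1). apply derivable_pt_lim_id. }
  assert (pr : forall x, t2 < x < t -> derivable_pt h x).
  { intros x Hx. exists 0. apply Hd; lra. }
  assert (C := null_derivative_loc h t2 t pr).
  assert (E : h t = h t2).
  { apply C; [| | lra].
    - intros x Hx. apply derivable_continuous_pt. exists 0. apply Hd; lra.
    - intros x P. apply derive_pt_eq_0. apply Hd; lra. }
  unfold h in E. lra.
Qed.
Lemma alg (a R0 C S tau d : R) (HS : S^2 = 1 - C^2) (Hd : d = a^2 + 2*a*C + 1)
  (Hdp : 0 < d) (Ha : 0 < a < 1) :
  (R0*S + a*((a^2-1)*S/d)*tau)^2 + (R0*C + (a*((2*a+(1+a^2)*C)/d) - 1)*tau)^2 - R0^2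
  = tau*(tau - 2*R0*(a+C)/(1-a^2))*((1-a^2)^2/d).
Proof.
  replace ((R0*S + a*((a^2-1)*S/d)*tau)^2) with (S^2 * (R0 + a*((a^2-1)/d)*tau)^2)
    by (field; lra).
  rewrite HS. subst d. field. split; nra.
Qed.
Theorem lemma2
  (alpha R0 lam t2 : R) (yT xO yO psi : R -> R)
  (Halpha : 0 < alpha < 1) (HR : 0 < R0)
  (Hlam : - PI <= lam <= PI)
  (HyT : forall t, derivable_pt_lim yT t 1)
  (HxO : forall t, derivable_pt_lim xO t (alpha * cos (psi t)))
  (HyO : forall t, derivable_pt_lim yO t (alpha * sin (psi t)))
  (Hx2 : xO t2 = R0 * sin lam)
  (Hy2 : yO t2 - yT t2 = R0 * cos lam)
  (Hpsi : forall t, t2 <= t -> psi t = heading2 alpha lam) :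
  forall t, t2 < t < t2 + 2 * R0 * (alpha + cos lam) / (1 - alpha ^ 2) ->
    xO t ^ 2 + (yO t - yT t) ^ 2 < R0 ^ 2.
Proof.
  intros t Ht.
  set (C := cos lam). set (S := sin lam).
  assert (HSC : S^2 = 1 - C^2) by (unfold S, C; rewrite <- !Rsqr_pow2; apply sin2).
  assert (HC1 : -1 <= C <= 1) by (unfold C; apply COS_bound).
  destruct (Rle_or_lt (alpha + C) 0) as [Hneg | Hpos].
  { exfalso.
    assert (2 * R0 * (alpha + C) / (1 - alpha ^ 2) <= 0).
    { assert (E : 2 * R0 * (alpha + C) / (1 - alpha ^ 2) * (1 - alpha^2) = 2 * R0 * (alpha + C)) by (field; nra).
      assert (0 < 1 - alpha^2) by nra.
      destruct (Rle_or_lt (2 * R0 * (alpha + C) / (1 - alpha ^ 2)) 0) as [|Hq]; auto.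
      assert (0 < 2 * R0 * (alpha + C) / (1 - alpha ^ 2) * (1 - alpha^2)) by (apply Rmult_lt_0_compat; lra).
      nra. }
    fold C in Ht. lra. }
  set (d := alpha^2 + 2*alpha*C + 1).
  assert (Hdp : 0 < d) by (unfold d; nra).
  set (k := (alpha^2 - 1) * S / d).
  set (s0 := (2*alpha + (1+alpha^2)*C) / d).
  assert (Hs0 : 0 <= s0).
  { unfold s0. unfold Rdiv. apply Rmult_le_pos; [assert (0 < (1+alpha^2)*(alpha+C)) by (apply Rmult_lt_0_compat; nra); nra | left; apply Rinv_0_lt_compat; lra]. }
  assert (Hks : k^2 + s0^2 = 1).
  { unfold k, s0. field_simplify; [| lra]. rewrite HSC. unfold d. field. fold d; lra. }
  assert (Hk2 : k^2 <= 1) by (assert (0 <= s0^2) by (apply pow2_ge_0); lra).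
  assert (Hk1 : -1 <= k <= 1).
  { destruct (Rle_or_lt k 1); destruct (Rle_or_lt (-1) k); try (split; lra); nra. }
  assert (Hc : cos (heading2 alpha lam) = k).
  { unfold heading2. fold S C d k. apply cos_acos; auto. }
  assert (Hs : sin (heading2 alpha lam) = s0).
  { unfold heading2. fold S C d k. rewrite sin_acos; auto.
    replace (1 - k²) with (s0^2) by (rewrite Rsqr_pow2; lra).
    apply sqrt_pow2; auto. }
  assert (EX : xO t = xO t2 + alpha * k * (t - t2)).
  { apply (lin_from_deriv xO (fun u => alpha * cos (psi u))); auto; try lra.
    intros u Hu. rewrite Hpsi, Hc; auto. }
  assert (EY : (yO t - yT t) = (yO t2 - yT t2) + (alpha * s0 - 1) * (t - t2)).
  { apply (lin_from_deriv (fun u => yO u - yT u) (fun u => alpha * sin (psi u) - 1)); try lra.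
    - intros u. apply (derivable_pt_lim_minus yO yT); auto.
    - intros u Hu. rewrite Hpsi, Hs; auto. }
  rewrite EX, EY, Hx2, Hy2. fold S C.
  assert (A := alg alpha R0 C S (t - t2) d HSC eq_refl Hdp Halpha).
  unfold k, s0.
  replace (R0 * S + alpha * ((alpha ^ 2 - 1) * S / d) * (t - t2)) with
    (R0*S + alpha*((alpha^2-1)*S/d)*(t - t2)) by ring.
  set (tau := t - t2). set (tf := 2*R0*(alpha+C)/(1-alpha^2)) in *.
  assert (Hq : 0 < (1-alpha^2)^2/d) by (unfold Rdiv; apply Rmult_lt_0_compat; [apply pow_lt; nra | apply Rinv_0_lt_compat; lra]).
  assert (tau*(tau - tf)*((1-alpha^2)^2/d) < 0).
  { assert (0 < tau) by (unfold tau; lra). assert (tau - tf < 0) by (unfold tau, tf, C; lra).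
    assert (tau * (tau - tf) < 0) by nra. nra. }
  fold tau in A. lra.
Qed.
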